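(* Let $m\ge1$, $q=2^m$, let $n$ be odd, and let $L(x)=ax^{2^k}+bx^{2^l}$ with $a,b\in\mathbb F_{q^n}$ and integers $0\le k,l<mn$, such that $L$ is nonzero as a map on $\mathbb F_{q^n}$. Let $d=\gcd(l-k,mn)$ and $s=\gcd(k-1,m)$. (1) If $k\equiv l\pmod m$, then $\mathrm{Tr}(x^{q+1})+L(x)$ is a permutation polynomial of $\mathbb F_{q^n}$ if and only if either (a) $a+b\in\mathbb F_q^*$, $(a+b)^{\frac{q-1}{2^s-1}}\ne1$ and $a^{\frac{q^n-1}{2^d-1}}\ne b^{\frac{q^n-1}{2^d-1}}$; or (b) $a+b=0$, $d=m$ and $\mathrm{Tr}(a^{-1})\ne0$. (2) If $k\not\equiv l\pmod m$ and $l\equiv1\pmod m$, then $\mathrm{Tr}(x^{q+1})+L(x)$ is a permutation polynomial of $\mathbb F_{q^n}$ if and only if $a,b\in\mathbb F_q$, $a^{\frac{q-1}{2^s-1}}\ne(b+1)^{\frac{q-1}{2^s-1}}$, and either $a^{\frac{q^n-1}{2^d-1}}\ne b^{\frac{q^n-1}{2^d-1}}$, or $d$ divides $m$ and $a^{\frac{q-1}{2^d-1}}=b^{\frac{q-1}{2^d-1}}$. (3) In particular, if $b=0$, then $\mathrm{Tr}(x^{q+1})+ax^{2^k}$ is a permutation polynomial of $\mathbb F_{q^n}$ if and only if $a\in\mathbb F_q^*$ and $a^{\frac{q-1}{2^s-1}}\ne1$.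
   Context: $\mathrm{Tr}$ denotes the trace map of $\mathbb F_{q^n}$ over $\mathbb F_q$. Polynomials are regarded as maps on $\mathbb F_{q^n}$; a permutation polynomial of a field is one inducing a bijection of that field. *)

(* Defs.v *)
From HB Require Import structures.
From mathcomp Require Import all_boot all_order all_algebra all_field.
Set Implicit Arguments. Unset Strict Implicit. Unset Printing Implicit Defensive.
Import GRing.Theory.
Local Open Scope ring_scope.

(* distance |i - j| between natural numbers (so that gcd(l-k, mn) and
   gcd(k-1, m) are computed correctly even when the difference is negative) *)
Definition distn (i j : nat) : nat := (maxn i j - minn i j)%N.

Definition Tr (F : finFieldType) (m n : nat) (y : F) : F :=
  \sum_(i < n) y ^+ ((2 ^ m) ^ i).

Definition inFq (F : finFieldType) (m : nat) (y : F) : bool := y ^+ (2 ^ m) == y.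

Definition fmap (F : finFieldType) (m n k l : nat) (a b : F) (x : F) : F :=
  Tr m n (x ^+ (2 ^ m + 1)) + a * x ^+ (2 ^ k) + b * x ^+ (2 ^ l).

Definition is_PP (F : finFieldType) (f : F -> F) : Prop := bijective f.

(* Main.v *)
Require Import Defs.
From mathcomp Require Import all_boot all_order all_algebra all_field.
From mathcomp Require Import zify cyclic ring.
Import GRing.Theory.
Local Open Scope ring_scope.
Set Implicit Arguments. Unset Strict Implicit.

Lemma sqrD2 (F : finFieldType) (h2 : 2 \in [pchar F]) (x y : F) :
  (x + y) ^+ 2 = x ^+ 2 + y ^+ 2.
Proof. by rewrite sqrrD (mulrn_pchar h2) addr0. Qed.

Lemma frobD (F : finFieldType) (h2 : 2 \in [pchar F]) (j : nat) (x y : F) :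
  (x + y) ^+ (2 ^ j) = x ^+ (2 ^ j) + y ^+ (2 ^ j).
Proof.
elim: j => [|j IH]; first by rewrite !expr1.
by rewrite expnSr !exprM IH sqrD2.
Qed.

Lemma frob_sum (F : finFieldType) (h2 : 2 \in [pchar F]) (j : nat) (I : Type) (r : seq I) (P : pred I) (f : I -> F) :
  (\sum_(i <- r | P i) f i) ^+ (2 ^ j) = \sum_(i <- r | P i) (f i) ^+ (2 ^ j).
Proof.
apply: (big_morph (fun x => x ^+ (2 ^ j))) => [x y|]; first exact: frobD.
by rewrite expr0n expn_eq0.
Qed.

Lemma opp2 (F : finFieldType) (h2 : 2 \in [pchar F]) (x : F) : - x = x.
Proof. exact: oppr_pchar2. Qed.

Lemma add2eq (F : finFieldType) (h2 : 2 \in [pchar F]) (x y : F) : (x + y == 0) = (x == y).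
Proof. by rewrite addr_eq0 opp2. Qed.

Lemma addxx (F : finFieldType) (h2 : 2 \in [pchar F]) (x : F) : x + x = 0.
Proof. exact: addrr_pchar2. Qed.

Lemma frob_inj (F : finFieldType) (h2 : 2 \in [pchar F]) (j : nat) (x y : F) :
  x ^+ (2 ^ j) = y ^+ (2 ^ j) -> x = y.
Proof.
move=> e; apply/eqP; rewrite -(add2eq h2).
have : (x + y) ^+ (2 ^ j) == 0 by rewrite frobD // e addxx.
by rewrite expf_eq0 expn_gt0.
Qed.

Lemma frobX (F : finFieldType) (i j : nat) (x : F) :
  x ^+ (2 ^ (i + j)) = (x ^+ (2 ^ i)) ^+ (2 ^ j).
Proof. by rewrite expnD exprM. Qed.

Lemma fixD (F : finFieldType) (i j : nat) (x : F) :
  x ^+ (2 ^ i) = x -> x ^+ (2 ^ j) = x -> x ^+ (2 ^ (i + j)) = x.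
Proof. by move=> hi hj; rewrite frobX hi hj. Qed.

Lemma fixM (F : finFieldType) (i c : nat) (x : F) :
  x ^+ (2 ^ i) = x -> x ^+ (2 ^ (i * c)) = x.
Proof.
move=> hi; elim: c => [|c IH]; first by rewrite muln0 expr1.
by rewrite mulnS fixD.
Qed.

Lemma fixB (F : finFieldType) (h2 : 2 \in [pchar F]) (i j : nat) (x : F) :
  x ^+ (2 ^ (i + j)) = x -> x ^+ (2 ^ i) = x -> x ^+ (2 ^ j) = x.
Proof.
move=> hij hi; apply: (@frob_inj F h2 i).
by rewrite -frobX addnC hij hi.
Qed.

Lemma fix_gcd (F : finFieldType) (h2 : 2 \in [pchar F]) (i j : nat) (x : F) :
  x ^+ (2 ^ i) = x -> x ^+ (2 ^ j) = x -> x ^+ (2 ^ (gcdn i j)) = x.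
Proof.
move=> hi hj; have [->|ip] := posnP i; first by rewrite gcd0n.
have [u _ /dvdnP [c hc]] := Bezoutl j ip.
apply: (@fixB F h2 (u * j)); first by rewrite addnC hc mulnC fixM.
by rewrite mulnC fixM.
Qed.

Lemma fix_shift (F : finFieldType) (a t r : nat) (x : F) :
  x ^+ (2 ^ a) = x -> x ^+ (2 ^ (a * t + r)) = x ^+ (2 ^ r).
Proof. by move=> h; rewrite frobX fixM. Qed.

Lemma fix_modn (F : finFieldType) (a k : nat) (x : F) :
  x ^+ (2 ^ a) = x -> x ^+ (2 ^ k) = x ^+ (2 ^ (k %% a)).
Proof.
by move=> h; rewrite {1}(divn_eq k a) mulnC fix_shift.
Qed.

Lemma fix_mod (F : finFieldType) (a k l : nat) (x : F) :
  x ^+ (2 ^ a) = x -> k = l %[mod a] -> x ^+ (2 ^ k) = x ^+ (2 ^ l).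
Proof.
by move=> h e; rewrite (fix_modn k h) (fix_modn l h) e.
Qed.

Lemma frobN (F : finFieldType) (m n : nat) (hc : #|F| = (2 ^ (m * n))%N) (x : F) :
  x ^+ (2 ^ (m * n)) = x.
Proof. by rewrite -hc expf_card. Qed.

Lemma qpow (F : finFieldType) (m i : nat) (y : F) : y ^+ ((2 ^ m) ^ i) = y ^+ (2 ^ (m * i)).
Proof. by rewrite -expnM. Qed.

Lemma Tr_add (F : finFieldType) (h2 : 2 \in [pchar F]) (m n : nat) (x y : F) :
  Tr m n (x + y) = Tr m n x + Tr m n y.
Proof. by rewrite /Tr -big_split; apply: eq_bigr => i _; rewrite !qpow frobD. Qed.

Lemma Tr0 (F : finFieldType) (m n : nat) : Tr m n (0 : F) = 0.
Proof. by rewrite /Tr big1 // => i _; rewrite expr0n !expn_eq0. Qed.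

Lemma Tr_frob (F : finFieldType) (m n : nat) (hc : #|F| = (2 ^ (m * n))%N) (hn : (0 < n)%N) (y : F) :
  Tr m n (y ^+ (2 ^ m)) = Tr m n y.
Proof.
rewrite /Tr; case: n hn hc => [//|n] _ hc.
rewrite big_ord_recr big_ord_recl /=.
under eq_bigr => i _ do rewrite -exprM -expnS.
rewrite -exprM -expnS -expnM frobN // expn0 expr1 addrC.
by congr (_ + _); apply: eq_bigr => i _; rewrite lift0.
Qed.

Lemma Tr_frobj (F : finFieldType) (m n : nat) (hc : #|F| = (2 ^ (m * n))%N) (hn : (0 < n)%N) (j : nat) (y : F) :
  Tr m n (y ^+ (2 ^ (m * j))) = Tr m n y.
Proof.
elim: j y => [|j IH] y; first by rewrite muln0 expr1.
by rewrite mulnS frobX IH Tr_frob.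
Qed.

Definition inFqP (F : finFieldType) (m : nat) (y : F) : inFq m y -> y ^+ (2 ^ m) = y := @eqP _ _ _.

Lemma Tr_Fq (F : finFieldType) (h2 : 2 \in [pchar F]) (m n : nat) (hc : #|F| = (2 ^ (m * n))%N) (hn : (0 < n)%N) (y : F) :
  inFq m (Tr m n y).
Proof.
apply/eqP; rewrite -{2}(Tr_frob hc hn y) /Tr (frob_sum h2).
by apply: eq_bigr => i _; rewrite exprAC.
Qed.

Lemma Tr_scal (F : finFieldType) (m n : nat) (c y : F) :
  inFq m c -> Tr m n (c * y) = c * Tr m n y.
Proof.
rewrite /inFq => /eqP hcq. rewrite /Tr mulr_sumr; apply: eq_bigr => i _.
by rewrite exprMn !qpow fixM.
Qed.

Lemma Tr_const (F : finFieldType) (h2 : 2 \in [pchar F]) (m n : nat) (hn : odd n) (c : F) :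
  inFq m c -> Tr m n c = c.
Proof.
rewrite /inFq => /eqP hcq; rewrite /Tr.
under eq_bigr => i _ do rewrite qpow fixM //.
rewrite sumr_const card_ord -(odd_double_half n) hn mulrnDr -muln2 mulnC mulrnA.
by rewrite (mulrn_pchar h2) mul0rn addr0.
Qed.

Lemma Tr_nz (F : finFieldType) (m n : nat) (hm : (0 < m)%N) (hc : #|F| = (2 ^ (m * n))%N) (hn : (0 < n)%N) :
  exists y : F, Tr m n y != 0.
Proof.
apply/existsP; rewrite -negb_forall; apply/negP => /forallP hall.
pose p : {poly F} := \sum_(i < n) 'X^((2 ^ m) ^ i).
have q1 : (1 < 2 ^ m)%N by rewrite -{1}(expn0 2) ltn_exp2l.
have ho : (n.-1 < n)%N by rewrite prednK.
have pnz : p != 0.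
  apply/eqP => /(congr1 (fun r : {poly F} => r`_((2 ^ m) ^ n.-1))).
  rewrite coef_sum coef0 (bigD1 (Ordinal ho)) //= coefXn eqxx.
  rewrite big1 ?addr0; first by move/eqP; rewrite oner_eq0.
  move=> i /eqP ne; rewrite coefXn eqn_exp2l //.
  suff -> : (n.-1 == i) = false by [].
  by apply/negP => /eqP e; apply: ne; apply: val_inj; rewrite /= e.
have := max_poly_roots pnz _ (enum_uniq F).
rewrite -cardE hc.
have -> : all (root p) (enum F).
  apply/allP => y _; rewrite /root /p horner_sum.
  under eq_bigr => i _ do rewrite hornerXn.
  exact: (hall y).
move=> /(_ isT) lt.
have : (size p <= ((2 ^ m) ^ n.-1).+1)%N.
  apply: leq_trans (size_sum _ _ _) _; apply/bigmax_leqP => i _.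
  by rewrite size_polyXn ltnS leq_exp2l // -ltnS prednK.
move=> hsz; have := leq_trans lt hsz.
rewrite expnM -{1}(prednK hn) expnS.
have := expn_gt0 (2 ^ m) n.-1; move: q1; move: ((2 ^ m) ^ n.-1)%N (2 ^ m)%N => X Y.
nia.
Qed.

Lemma gcd2_aux a c : gcdn (2 ^ a - 1) (2 ^ (a + c) - 1) = gcdn (2 ^ a - 1) (2 ^ c - 1).
Proof.
have e : (2 ^ (a + c) - 1 = 2 ^ c * (2 ^ a - 1) + (2 ^ c - 1))%N.
  rewrite expnD; have := expn_gt0 2 a; have := expn_gt0 2 c.
  move: (2 ^ a)%N (2 ^ c)%N => X Y; nia.
by rewrite e gcdnMDl.
Qed.

Lemma gcd2 a b : gcdn (2 ^ a - 1) (2 ^ b - 1) = (2 ^ (gcdn a b) - 1)%N.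
Proof.
move: {2}(a + b)%N (leqnn (a + b)) => s; elim: s a b => [|s IH] a b hs.
  by have [-> ->] : a = 0%N /\ b = 0%N by lia.
have [->|ap] := posnP a; first by rewrite !gcd0n.
have [->|bp] := posnP b; first by rewrite !gcdn0.
wlog ab : a b hs ap bp / (a <= b)%N.
  move=> W; have [/W|ba] := leqP a b; first exact.
  by rewrite gcdnC [gcdn a b]gcdnC W //; lia.
have [c bc] : exists c, b = (a + c)%N by exists (b - a)%N; lia.
subst b.
have -> : gcdn a (a + c) = gcdn a c by rewrite addnC gcdnDr.
rewrite gcd2_aux; apply: IH; lia.
Qed.

Lemma dvd2 d N : (d %| N)%N -> (2 ^ d - 1 %| 2 ^ N - 1)%N.
Proof.
move=> h; have : gcdn (2 ^ d - 1) (2 ^ N - 1) = (2 ^ d - 1)%N by rewrite gcd2 (gcdn_idPl h).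
by move=> <-; rewrite dvdn_gcdr.
Qed.

Lemma dvd2_inv d m : (0 < m)%N -> (2 ^ d - 1 %| 2 ^ m - 1)%N -> (d %| m)%N.
Proof.
move=> mp h; have := gcdn_idPl h; rewrite gcd2 => e.
have : (2 ^ gcdn d m = 2 ^ d)%N.
  have := expn_gt0 2 (gcdn d m); have := expn_gt0 2 d; lia.
move/eqP; rewrite eqn_exp2l // => /eqP e2.
by rewrite -e2 dvdn_gcdr.
Qed.

Lemma unit_pow (F : finFieldType) (x : F) : x != 0 -> x ^+ (#|F|.-1) = 1.
Proof.
move=> nz; apply: (mulfI nz); rewrite mulr1 -exprS prednK ?expf_card //.
exact: (ltn_trans _ (finNzRing_gt1 F)).
Qed.

Lemma prim_exists (F : finFieldType) : exists g : F, (#|F|.-1).-primitive_root g.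
Proof.
have hn : (0 < #|F|.-1)%N by rewrite -subn1 subn_gt0 finNzRing_gt1.
have : has (#|F|.-1).-primitive_root (enum (predC1 (0 : F))).
  apply: has_prim_root => //; last by rewrite -cardE cardC1.
    by apply/allP => x; rewrite mem_enum /= => nz; rewrite unity_rootE unit_pow.
  exact: enum_uniq.
by case/hasP => g _ pg; exists g.
Qed.

Lemma powlem (F : finFieldType) (g : F) (M : nat) (prim : M.-primitive_root g)
  (D E : nat) (hD : (D %| M)%N) (c : F) (hc : c ^+ D = 1) :
  (exists x, x ^+ D = 1 /\ x ^+ E = c) <-> c ^+ (D %/ gcdn E D) = 1.
Proof.
have Mp := prim_order_gt0 prim.
have Dp : (0 < D)%N by apply: dvdn_gt0 Mp hD.
set G := gcdn E D.
have GD : (G %| D)%N by apply: dvdn_gcdr.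
have GE : (G %| E)%N by apply: dvdn_gcdl.
have Gp : (0 < G)%N by rewrite gcdn_gt0 Dp orbT.
split.
  move=> [x [h1 <-]]; rewrite -exprM.
  have -> : (E * (D %/ G) = D * (E %/ G))%N.
    by rewrite muln_divA // mulnC -muln_divA.
  by rewrite exprM h1 expr1n.
move=> hcG.
have ph := dvdn_prim_root prim hD.
have [t ct] := prim_rootP ph hc.
have Gt : (G %| t)%N.
  have : (D %| t * (D %/ G))%N by rewrite (prim_order_dvd ph) exprM -ct hcG.
  rewrite -{1}(divnK GD) [(t * _)%N]mulnC dvdn_pmul2l //.
  by rewrite divn_gt0 // dvdn_leq.
have [E0|Ep] := posnP E.
  exists 1; rewrite !expr1n; split => //.
  by move: hcG; rewrite /G E0 gcd0n divnn Dp expr1.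
have [km kn hk _] := egcdnP D Ep.
exists ((g ^+ (M %/ D)) ^+ (km * (t %/ G))); split.
  by rewrite -exprM [(_ * D)%N]mulnC exprM (prim_expr_order ph) expr1n.
rewrite -exprM mulnAC hk mulnDl exprD -mulnA mulnCA exprM (prim_expr_order ph) expr1n mul1r.
by rewrite -/G mulnC divnK.
Qed.

Lemma card_kerim (F : finFieldType) (h : F -> F) (hadd : forall x y, h (x + y) = h x + h y) :
  #|F| = (#|[set x | h x == 0%R]| * #|[set h x | x in F]|)%N.
Proof.
have h0 : h 0 = 0 by apply: (@addrI _ (h 0)); rewrite -hadd !addr0.
have hB x y : h (x - y) = h x - h y by have := hadd (x - y) y; rewrite subrK => ->; rewrite addrK.
have e1 : #|F| = (\sum_(x : F) 1)%N by rewrite sum1_card.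
rewrite e1 (partition_big h (fun y => y \in [set h x | x in F])) /=; last first.
  by move=> x _; apply: imset_f.
rewrite mulnC -sum_nat_const; apply: eq_bigr => y /imsetP [x0 _ ->].
rewrite sum1dep_card.
have -> : [set x | h x == h x0] = [set x + x0 | x in [set x | h x == 0]].
  apply/setP => x; rewrite !inE; apply/idP/imsetP.
    move=> /eqP e; exists (x - x0); first by rewrite inE hB e subrr.
    by rewrite subrK.
  by case=> z; rewrite inE => /eqP hz ->; rewrite hadd hz add0r.
by rewrite card_imset //; apply: addIr.
Qed.

Lemma inFq0 (F : finFieldType) (m : nat) : inFq m (0 : F).
Proof. by rewrite /inFq expr0n expn_eq0. Qed.

Lemma inFq1 (F : finFieldType) (m : nat) : inFq m (1 : F).
Proof. by rewrite /inFq expr1n. Qed.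

Lemma inFqD (F : finFieldType) (h2 : 2 \in [pchar F]) (m : nat) (x y : F) :
  inFq m x -> inFq m y -> inFq m (x + y).
Proof. by rewrite /inFq => /eqP hx /eqP hy; rewrite frobD // hx hy. Qed.

Lemma inFqM (F : finFieldType) (m : nat) (x y : F) :
  inFq m x -> inFq m y -> inFq m (x * y).
Proof. by rewrite /inFq => /eqP hx /eqP hy; rewrite exprMn hx hy. Qed.

Lemma inFqV (F : finFieldType) (m : nat) (x : F) : inFq m x -> inFq m (x^-1).
Proof. by rewrite /inFq => /eqP hx; rewrite exprVn hx. Qed.

Lemma inFqX (F : finFieldType) (m j : nat) (x : F) : inFq m x -> inFq m (x ^+ j).
Proof. by rewrite /inFq => /eqP hx; rewrite exprAC hx. Qed.

Lemma inFq_frob (F : finFieldType) (h2 : 2 \in [pchar F]) (m j : nat) (x : F) :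
  inFq m (x ^+ (2 ^ j)) = inFq m x.
Proof.
apply/idP/idP; last exact: inFqX.
rewrite /inFq => /eqP h; apply/eqP; apply: (frob_inj h2 (j := j)).
by rewrite exprAC h.
Qed.

Lemma inFqE (F : finFieldType) (m : nat) (x : F) : inFq m x -> x ^+ (2 ^ m) = x.
Proof. by move/eqP. Qed.

Definition Lf (F : finFieldType) (k l : nat) (a b : F) (x : F) : F :=
  a * x ^+ (2 ^ k) + b * x ^+ (2 ^ l).

Lemma Lf_add (F : finFieldType) (h2 : 2 \in [pchar F]) (k l : nat) (a b x y : F) :
  Lf k l a b (x + y) = Lf k l a b x + Lf k l a b y.
Proof.
rewrite /Lf !frobD // !mulrDr.
by rewrite -!addrA; congr (_ + _); rewrite addrCA.
Qed.

Lemma fmap_shift (F : finFieldType) (h2 : 2 \in [pchar F]) (m n k l : nat) (a b : F)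
  (hc : #|F| = (2 ^ (m * n))%N) (hn : (0 < n)%N) (x u : F) :
  fmap m n k l a b (x + u) = fmap m n k l a b x
    + Tr m n (x * (u ^+ (2 ^ m) + u ^+ (2 ^ (m * n.-1))))
    + Tr m n (u ^+ (2 ^ m + 1)) + Lf k l a b u.
Proof.
have e1 : (x + u) ^+ (2 ^ m + 1) = x ^+ (2 ^ m + 1) + (x ^+ (2 ^ m) * u + x * u ^+ (2 ^ m)) + u ^+ (2 ^ m + 1).
  rewrite !exprD !expr1 frobD //; ring.
have e2 : Tr m n (x ^+ (2 ^ m) * u) = Tr m n (x * u ^+ (2 ^ (m * n.-1))).
  rewrite -(Tr_frobj hc hn n.-1) exprMn -frobX -mulnS prednK // frobN //.
rewrite /fmap e1 [x * (_ + _)]mulrDr !(Tr_add h2) e2 /Lf !frobD //.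
ring.
Qed.

Lemma w_Fq (F : finFieldType) (h2 : 2 \in [pchar F]) (m n : nat) (u : F) :
  inFq m u -> u ^+ (2 ^ m) + u ^+ (2 ^ (m * n.-1)) = 0.
Proof. by move/inFqE => hu; rewrite fixM // hu addxx. Qed.

Lemma w_Fq_inv (F : finFieldType) (h2 : 2 \in [pchar F]) (m n : nat)
  (hc : #|F| = (2 ^ (m * n))%N) (hn : odd n) (u : F) :
  u ^+ (2 ^ m) + u ^+ (2 ^ (m * n.-1)) = 0 -> inFq m u.
Proof.
move/eqP; rewrite add2eq // => /eqP e.
have n0 : (0 < n)%N by apply: odd_gt0.
have h2m : u ^+ (2 ^ (m * 2)) = u.
  by rewrite mulnS muln1 frobX e -frobX -mulnSr prednK // frobN.
have [j hj] : exists j, n = (2 * j).+1 by exists n./2; rewrite -{1}(odd_double_half n) hn add1n -muln2 mulnC.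
apply/eqP.
have := fixM j h2m; rewrite -mulnA => h.
by rewrite -{2}(frobN hc u) hj mulnS [(m + _)%N]addnC frobX h.
Qed.

Lemma Tr_sq (F : finFieldType) (h2 : 2 \in [pchar F]) (m n : nat) (hn : odd n) (u : F) :
  inFq m u -> Tr m n (u ^+ (2 ^ m + 1)) = u ^+ 2.
Proof.
move=> hu; rewrite exprD expr1 (inFqE hu) -expr2 Tr_const //.
exact: inFqX.
Qed.

Lemma Tr_onto (F : finFieldType) (h2 : 2 \in [pchar F]) (m n : nat) (hm : (0 < m)%N) (hc : #|F| = (2 ^ (m * n))%N) (hn : (0 < n)%N)
  (w t : F) : w != 0 -> inFq m t -> exists x, Tr m n (x * w) = t.
Proof.
move=> wnz ht; have [y0 hy0] := Tr_nz hm hc hn.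
exists (t / Tr m n y0 * y0 / w).
rewrite mulfVK // Tr_scal ?divfK //.
by apply: inFqM => //; apply: inFqV; apply: Tr_Fq.
Qed.

Lemma crit (F : finFieldType) (h2 : 2 \in [pchar F]) (m n k l : nat) (a b : F)
  (hm : (0 < m)%N) (hc : #|F| = (2 ^ (m * n))%N) (hn : odd n) :
  is_PP (fmap m n k l a b) <->
  ((forall u, inFq m (Lf k l a b u) -> inFq m u) /\
   (forall u, inFq m u -> u != 0 -> Lf k l a b u != u ^+ 2)).
Proof.
have n0 : (0 < n)%N by apply: odd_gt0.
split.
  move=> /bij_inj inj; split.
    move=> u hL; apply/negPn/negP => hu.
    set w := u ^+ (2 ^ m) + u ^+ (2 ^ (m * n.-1)).
    have wnz : w != 0 by apply/eqP => /(w_Fq_inv h2 hc hn); apply/negP.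
    have ht : inFq m (Tr m n (u ^+ (2 ^ m + 1)) + Lf k l a b u).
      by apply: inFqD => //; apply: Tr_Fq.
    have [x hx] := Tr_onto h2 hm hc n0 wnz ht.
    have := fmap_shift h2 k l a b hc n0 x u.
    have E (p z1 z2 : F) : p + (z1 + z2) + z1 + z2 = p.
      by rewrite -[_ + z1 + z2]addrA -addrA addxx // addr0.
    rewrite -/w hx E => /(inj (x + u) x) e.
    have u0 : u = 0 by apply: (@addrI _ x); rewrite addr0.
    by move: hu; rewrite u0 inFq0.
  move=> u hu unz; apply/eqP => hL.
  have := fmap_shift h2 k l a b hc n0 0 u.
  rewrite mul0r Tr0 addr0 Tr_sq // hL -addrA addxx // addr0 add0r => /inj u0.
  by move: unz; rewrite u0 eqxx.
move=> [hA hB]; apply: injF_bij => x y e.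
have := fmap_shift h2 k l a b hc n0 x (y - x).
rewrite addrC subrK -e; set fx := fmap m n k l a b x; rewrite -2!addrA.
have E (p z : F) : p = p + z -> z = 0.
  by move=> h; apply: (@addrI _ p); rewrite addr0; symmetry.
move=> hh; have := E _ _ hh.
set u := y - x.
move/eqP; rewrite addrA add2eq // => /eqP hL.
have hu : inFq m u.
  by apply: hA; rewrite -hL; apply: inFqD => //; apply: Tr_Fq.
move: hL. rewrite w_Fq // mulr0 Tr0 add0r Tr_sq // => hL.
have : u == 0.
  by apply/negPn/negP => unz; move: (hB u hu unz); rewrite hL eqxx.
by rewrite subr_eq0 => /eqP.
Qed.

Lemma hq_add (F : finFieldType) (h2 : 2 \in [pchar F]) (m : nat) (x y : F) :
  (x + y) ^+ (2 ^ m) + (x + y) = (x ^+ (2 ^ m) + x) + (y ^+ (2 ^ m) + y).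
Proof. by rewrite frobD // addrACA. Qed.

Lemma hq0 (F : finFieldType) (h2 : 2 \in [pchar F]) (m : nat) (x : F) :
  (x ^+ (2 ^ m) + x == 0) = inFq m x.
Proof. by rewrite add2eq. Qed.

Lemma A_strong (F : finFieldType) (h2 : 2 \in [pchar F]) (m : nat) (L : F -> F)
  (Ladd : forall x y, L (x + y) = L x + L y)
  (hA : forall u, inFq m (L u) -> inFq m u) : forall u, inFq m u -> inFq m (L u).
Proof.
pose h (y : F) := y ^+ (2 ^ m) + y.
have hadd x y : h (x + y) = h x + h y by apply: hq_add.
have gadd x y : h (L (x + y)) = h (L x) + h (L y) by rewrite Ladd hadd.
have ch := card_kerim hadd.
have cg := card_kerim gadd.
have sI : [set h (L x) | x in F] \subset [set h x | x in F].
  by apply/subsetP => z /imsetP [x _ ->]; apply: imset_f.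
have sK : [set x | h (L x) == 0] \subset [set x | h x == 0].
  by apply/subsetP => x; rewrite !inE /h !hq0 //; apply: hA.
have ig : (0 < #|[set h (L x) | x in F]|)%N.
  by apply/card_gt0P; exists (h (L 0)); apply: imset_f.
have le1 := subset_leq_card sI.
have le2 : (#|[set x | h x == 0%R]| <= #|[set x | h (L x) == 0%R]|)%N.
  move: ch cg le1 ig; move: #|F| => N.
  move: #|[set x | h x == 0%R]| #|[set h x | x in F]| #|[set x | h (L x) == 0%R]| #|[set h (L x) | x in F]|.
  move=> A B C D -> e; nia.
have eK : [set x | h (L x) == 0] = [set x | h x == 0].
  by apply/eqP; rewrite eqEcard sK le2.
move=> u hu.
have : u \in [set x | h (L x) == 0] by rewrite eK inE /h hq0.
by rewrite inE /h hq0.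
Qed.

Lemma im_kerTr (F : finFieldType) (h2 : 2 \in [pchar F]) (m n : nat) (hm : (0 < m)%N)
  (hc : #|F| = (2 ^ (m * n))%N) (hn : (0 < n)%N) (h : F -> F)
  (hadd : forall x y, h (x + y) = h x + h y)
  (hker : forall y, (h y == 0) = inFq m y) (hTr : forall y, Tr m n (h y) = 0) :
  forall z, Tr m n z = 0 -> exists y, h y = z.
Proof.
have ch := card_kerim hadd.
have ct := card_kerim (h := Tr m n) (fun x y => Tr_add h2 m n x y).
have e1 : [set x | h x == 0%R] = [set x | inFq m x] by apply/setP => x; rewrite !inE hker.
have e2 : [set Tr m n x | x in F] = [set x | inFq m x].
  apply/setP => x; rewrite inE; apply/imsetP/idP.
    by move=> [y _ ->]; apply: Tr_Fq.
  move=> hx; have [y hy] := Tr_onto h2 hm hc hn (oner_neq0 F) hx.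
  by exists (y * 1).
have pos : (0 < #|[set x : F | inFq m x]|)%N.
  by apply/card_gt0P; exists 0; rewrite inE inFq0.
have sI : [set h x | x in F] \subset [set x : F | Tr m n x == 0%R].
  by apply/subsetP => z /imsetP [x _ ->]; rewrite inE hTr.
have ec : #|[set h x | x in F]| = #|[set x : F | Tr m n x == 0%R]|.
  move: ch ct; rewrite e1 e2 => -> /eqP.
  by rewrite [X in _ == X]mulnC eqn_pmul2l // => /eqP.
have eI : [set h x | x in F] = [set x : F | Tr m n x == 0%R].
  by apply/eqP; rewrite eqEcard sI ec leqnn.
move=> z hz; have : z \in [set h x | x in F] by rewrite eI inE hz.
by case/imsetP => y _ ->; exists y.
Qed.

Lemma froot (F : finFieldType) (A k : nat) (hA : (0 < A)%N) (y : F) :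
  y ^+ (2 ^ A) = y -> (y ^+ (2 ^ (A * k - k))) ^+ (2 ^ k) = y.
Proof.
move=> hy; rewrite -frobX subnK ?fixM //.
by rewrite -{1}(mul1n k) leq_mul2r hA orbT.
Qed.

Lemma fix_unit (F : finFieldType) (a : nat) (x : F) : x != 0 ->
  (x ^+ (2 ^ a) == x) = (x ^+ (2 ^ a - 1) == 1).
Proof.
move=> nz; rewrite -{1}(subnK (expn_gt0 2 a)) addn1 exprS.
by rewrite -{3}(mulr1 x) (inj_eq (mulfI nz)).
Qed.

Lemma unitFq (F : finFieldType) (m : nat) (x : F) (hm : (0 < m)%N) :
  (x ^+ (2 ^ m - 1) == 1) = inFq m x && (x != 0).
Proof.
have [->|nz] := eqVneq x 0.
  have p : (0 < 2 ^ m - 1)%N by rewrite subn_gt0 -{1}(expn0 2) ltn_exp2l.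
  by rewrite expr0n andbF eqn0Ngt p /= eq_sym oner_eq0.
by rewrite andbT /inFq fix_unit.
Qed.

Lemma card_unit (F : finFieldType) (m n : nat) (hc : #|F| = (2 ^ (m * n))%N) :
  #|F|.-1 = (2 ^ (m * n) - 1)%N.
Proof. by rewrite hc subn1. Qed.

Lemma SF (F : finFieldType) (h2 : 2 \in [pchar F]) (m n d : nat) (hm : (0 < m)%N) (hn : (0 < n)%N)
  (hc : #|F| = (2 ^ (m * n))%N) (hd : (d %| m * n)%N)
  (H : forall c : F, c ^+ (2 ^ d) = c -> inFq m c) : (d %| m)%N.
Proof.
have [g pg] := prim_exists F.
rewrite (card_unit hc) in pg.
have ph := dvdn_prim_root pg (dvd2 hd).
set h := g ^+ _ in ph.
have N0 : (0 < m * n)%N by rewrite muln_gt0 hm hn.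
have d0 : (0 < d)%N by apply: dvdn_gt0 N0 hd.
have D0 : (0 < 2 ^ d - 1)%N by rewrite subn_gt0 -{1}(expn0 2) ltn_exp2l.
have hnz : h != 0.
  apply/eqP => h0; have := prim_expr_order ph; rewrite h0 expr0n.
  by move/eqP; rewrite eq_sym gtn_eqF // oner_eq0.
have : inFq m h.
  apply: H; apply/eqP; rewrite fix_unit //; apply/eqP; exact: prim_expr_order ph.
move=> hq; have : h ^+ (2 ^ m - 1) == 1 by rewrite unitFq // hq hnz.
rewrite -(prim_order_dvd ph) => /dvd2_inv; apply; exact: hm.
Qed.

Lemma distnC (i j : nat) : distn i j = distn j i.
Proof. by rewrite /distn maxnC minnC. Qed.

Lemma distn_le (i j : nat) : (i <= j)%N -> distn j i = (j - i)%N.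
Proof. by move=> h; rewrite /distn (maxn_idPl h) (minn_idPr h). Qed.

Lemma sq_inj (F : finFieldType) (h2 : 2 \in [pchar F]) (x y : F) : x ^+ 2 = y ^+ 2 -> x = y.
Proof. by move=> e; apply: (frob_inj h2 (j := 1)); rewrite expn1. Qed.

Lemma Bc (F : finFieldType) (h2 : 2 \in [pchar F]) (m n k : nat) (hm : (0 < m)%N) (hn : (0 < n)%N)
  (hc : #|F| = (2 ^ (m * n))%N) (c : F) (hcq : inFq m c) (cnz : c != 0) :
  (exists u, [/\ inFq m u, u != 0 & u ^+ (2 ^ k) = c * u ^+ 2]) <->
  c ^+ ((2 ^ m - 1) %/ (2 ^ (gcdn (distn k 1) m) - 1)) = 1.
Proof.
case: k => [|k].
  have -> : distn 0 1 = 1%N by [].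
  rewrite gcd1n (_ : (2 ^ 1 - 1 = 1)%N) // divn1.
  split => _; first by apply/eqP; rewrite unitFq // hcq cnz.
  exists c^-1; split; first exact: inFqV.
    by rewrite invr_eq0.
  by rewrite expr1 exprVn expr2 invfM mulrA mulfV // mul1r.
rewrite distn_le // (_ : (k.+1 - 1 = k)%N); last by rewrite subn1.
have [g pg] := prim_exists F.
rewrite (card_unit hc) in pg.
have hD : (2 ^ m - 1 %| 2 ^ (m * n) - 1)%N by apply: dvd2; apply: dvdn_mulr.
set c' := c ^+ (2 ^ (m * 1 - 1)).
have cc : c' ^+ 2 = c by have := froot 1 hm (inFqE hcq); rewrite expn1.
have c'q : inFq m c' by apply: inFqX.
have c'nz : c' != 0 by rewrite expf_eq0 negb_and cnz orbT.
have c'D : c' ^+ (2 ^ m - 1) = 1 by apply/eqP; rewrite unitFq // c'q c'nz.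
have PL := powlem pg (2 ^ k - 1) hD c'D.
rewrite gcd2 in PL.
set e1 := ((2 ^ m - 1) %/ (2 ^ gcdn k m - 1))%N in PL *.
have -> : (c ^+ e1 = 1) <-> (c' ^+ e1 = 1).
  split => h.
    by rewrite /c' exprAC h expr1n.
  by rewrite -cc exprAC h expr1n.
rewrite -PL; split.
  move=> [u [uq unz hu]]; exists u; split.
    by apply/eqP; rewrite unitFq // uq unz.
  apply/eqP; rewrite -(inj_eq (mulfI unz)) -exprS -addn1 subnK ?expn_gt0 //.
  have : (u ^+ (2 ^ k)) ^+ 2 = (c' * u) ^+ 2 by rewrite -exprM -expnSr hu exprMn cc.
  by move/(sq_inj h2) => ->; rewrite mulrC.
move=> [x [hx1 hx2]].
have /andP [xq xnz] : inFq m x && (x != 0) by rewrite -unitFq // hx1.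
exists x; split => //.
rewrite expnS mulnC exprM.
have -> : x ^+ (2 ^ k) = c' * x.
  by rewrite -{1}(subnK (expn_gt0 2 k)) addn1 exprS hx2 mulrC.
by rewrite exprMn cc.
Qed.

Lemma div_eq1 (F : finFieldType) (x y : F) : y != 0 -> (x / y = 1) <-> (x = y).
Proof.
move=> ynz; split => [h|->]; last exact: divff.
by rewrite -(divfK ynz x) h mul1r.
Qed.

Lemma e1_gt0 (m k : nat) (hm : (0 < m)%N) :
  (0 < (2 ^ m - 1) %/ (2 ^ (gcdn (distn k 1) m) - 1))%N.
Proof.
set s := gcdn _ m.
have s0 : (0 < s)%N by rewrite gcdn_gt0 hm orbT.
have sm : (s <= m)%N by apply: dvdn_leq => //; apply: dvdn_gcdr.
rewrite divn_gt0; last by rewrite subn_gt0 -{1}(expn0 2) ltn_exp2l.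
by rewrite leq_sub2r // leq_exp2l.
Qed.

Lemma Blem_pos (F : finFieldType) (h2 : 2 \in [pchar F]) (m n k : nat) (hm : (0 < m)%N) (hn : (0 < n)%N)
  (hc : #|F| = (2 ^ (m * n))%N) (al be : F) (ha : inFq m al) (hb : inFq m be) :
  (exists u, [/\ inFq m u, u != 0 & al * u ^+ (2 ^ k) = be * u ^+ 2]) <->
  al ^+ ((2 ^ m - 1) %/ (2 ^ (gcdn (distn k 1) m) - 1)) = be ^+ ((2 ^ m - 1) %/ (2 ^ (gcdn (distn k 1) m) - 1)).
Proof.
have e0 := e1_gt0 k hm.
set e1 := ((2 ^ m - 1) %/ _)%N in e0 *.
have [->|anz] := eqVneq al 0.
  rewrite expr0n eqn0Ngt e0 /=; split.
    move=> [u [_ unz]]; rewrite mul0r => /esym /eqP; rewrite mulf_eq0 expf_eq0 (negbTE unz) orbF.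
    by move/eqP ->; rewrite expr0n eqn0Ngt e0.
  move=> /esym /eqP; rewrite expf_eq0 e0 /= => /eqP ->.
  by exists 1; rewrite inFq1 oner_neq0 !mul0r.
have [->|bnz] := eqVneq be 0.
  split.
    move=> [u [_ unz]]; rewrite mul0r => /eqP; rewrite mulf_eq0 expf_eq0 (negbTE unz) (negbTE anz).
    by rewrite andbF.
  rewrite (expr0n _ e1) eqn0Ngt e0 /= => /eqP; rewrite expf_eq0 (negbTE anz) andbF //.
have cq : inFq m (be / al) by apply: inFqM => //; apply: inFqV.
have cnz : be / al != 0 by rewrite mulf_eq0 invr_eq0 negb_or anz bnz.
have -> : (al ^+ e1 = be ^+ e1) <-> ((be / al) ^+ e1 = 1).
  rewrite expr_div_n div_eq1 ?expf_neq0 //; split; by move=> ->.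
rewrite -(Bc h2 k hm hn hc cq cnz); split.
  move=> [u [uq unz hu]]; exists u; split => //.
  by rewrite mulrAC -hu mulrC mulrA mulVf // mul1r.
move=> [u [uq unz hu]]; exists u; split => //.
by rewrite hu; field.
Qed.

Lemma Blem (F : finFieldType) (h2 : 2 \in [pchar F]) (m n k : nat) (hm : (0 < m)%N) (hn : (0 < n)%N)
  (hc : #|F| = (2 ^ (m * n))%N) (al be : F) (ha : inFq m al) (hb : inFq m be) :
  (forall u, inFq m u -> u != 0 -> al * u ^+ (2 ^ k) != be * u ^+ 2) <->
  al ^+ ((2 ^ m - 1) %/ (2 ^ (gcdn (distn k 1) m) - 1)) != be ^+ ((2 ^ m - 1) %/ (2 ^ (gcdn (distn k 1) m) - 1)).
Proof.
have P := Blem_pos h2 k hm hn hc ha hb.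
split.
  move=> H; apply/eqP => /P [u [uq unz e]].
  by move: (H u uq unz); rewrite e eqxx.
move=> H u uq unz; apply/eqP => e; move/eqP: H; apply; apply: (proj1 P).
by exists u.
Qed.

Lemma unitF (F : finFieldType) (m n : nat) (hc : #|F| = (2 ^ (m * n))%N) (hN : (0 < m * n)%N) (x : F) :
  (x ^+ (2 ^ (m * n) - 1) == 1) = (x != 0).
Proof. by rewrite unitFq // /inFq frobN // eqxx. Qed.

Lemma Klem (F : finFieldType) (h2 : 2 \in [pchar F]) (m n k l : nat) (hm : (0 < m)%N) (hn : (0 < n)%N)
  (hc : #|F| = (2 ^ (m * n))%N) (a b : F) (anz : a != 0) (bnz : b != 0) :
  (exists x, x != 0 /\ a * x ^+ (2 ^ k) = b * x ^+ (2 ^ l)) <->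
  a ^+ (((2 ^ m) ^ n - 1) %/ (2 ^ (gcdn (distn l k) (m * n)) - 1)) =
  b ^+ (((2 ^ m) ^ n - 1) %/ (2 ^ (gcdn (distn l k) (m * n)) - 1)).
Proof.
wlog kl : a b k l anz bnz / (k <= l)%N.
  move=> W; have [/W|lk] := leqP k l; first exact.
  rewrite distnC; have := W b a l k bnz anz (ltnW lk); rewrite distnC => P.
  split.
    by move=> [x [xnz e]]; apply/esym/P; exists x; split.
  by move=> e; have [x [xnz e']] := (proj2 P) (esym e); exists x; split.
have hN : (0 < m * n)%N by rewrite muln_gt0 hm hn.
rewrite -expnM distn_le //.
have [e ->] : exists e, l = (k + e)%N by exists (l - k)%N; rewrite subnKC.
rewrite addKn.
have [g pg] := prim_exists F.
rewrite (card_unit hc) in pg.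
have cD : (a / b) ^+ (2 ^ (m * n) - 1) = 1 by apply/eqP; rewrite unitF // mulf_neq0 ?invr_eq0.
have PL := powlem pg (2 ^ e - 1) (dvdnn _) cD.
rewrite gcd2 in PL.
have -> : (a ^+ ((2 ^ (m * n) - 1) %/ (2 ^ gcdn e (m * n) - 1)) =
           b ^+ ((2 ^ (m * n) - 1) %/ (2 ^ gcdn e (m * n) - 1))) <->
          ((a / b) ^+ ((2 ^ (m * n) - 1) %/ (2 ^ gcdn e (m * n) - 1)) = 1).
  by rewrite expr_div_n div_eq1 ?expf_neq0.
rewrite -PL.
have ye (y : F) : y != 0 -> y ^+ (2 ^ e) = y * y ^+ (2 ^ e - 1).
  by move=> _; rewrite -exprS subn1 prednK ?expn_gt0.
split.
  move=> [x [xnz hx]]; exists (x ^+ (2 ^ k)).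
  have ynz : x ^+ (2 ^ k) != 0 by rewrite expf_neq0.
  split; first by apply/eqP; rewrite unitF.
  move: hx; rewrite frobX ye // => hx.
  apply: (mulfI (mulf_neq0 bnz ynz)); rewrite -mulrA -hx; field; exact: bnz.
move=> [y [y1 hy]].
have ynz : y != 0 by rewrite -(unitF hc hN) y1.
set x := y ^+ (2 ^ (m * n * k - k)).
have hx : x ^+ (2 ^ k) = y by apply: froot => //; exact: frobN.
exists x; split.
  by apply/eqP => x0; move: ynz; rewrite -hx x0 expr0n expn_eq0 eqxx.
rewrite frobX hx ye // hy; field; exact: bnz.
Qed.

Lemma gcd_em (e m n d : nat) : d = gcdn e (m * n) -> (d %| m)%N -> gcdn e m = d.
Proof.
move=> -> h; apply/eqP; rewrite eqn_dvd; apply/andP; split.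
  by rewrite dvdn_gcd dvdn_gcdl (dvdn_trans (dvdn_gcdr _ _)) // dvdn_mulr.
by rewrite dvdn_gcd dvdn_gcdl h.
Qed.

Lemma KerFq (F : finFieldType) (h2 : 2 \in [pchar F]) (m n k l : nat) (hm : (0 < m)%N) (hn : (0 < n)%N)
  (hc : #|F| = (2 ^ (m * n))%N) (a b : F) (ha : inFq m a) (hb : inFq m b) (anz : a != 0) (bnz : b != 0)
  (hdm : (gcdn (distn l k) (m * n) %| m)%N)
  (hE : a ^+ ((2 ^ m - 1) %/ (2 ^ gcdn (distn l k) (m * n) - 1)) =
        b ^+ ((2 ^ m - 1) %/ (2 ^ gcdn (distn l k) (m * n) - 1)))
  (x : F) : a * x ^+ (2 ^ k) = b * x ^+ (2 ^ l) -> inFq m x.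
Proof.
wlog kl : a b k l ha hb anz bnz hdm hE / (k <= l)%N.
  move=> W; have [/W|lk] := leqP k l; first exact.
  move=> e; apply: (W b a l k) => //; try by rewrite distnC.
  exact: ltnW.
rewrite distn_le // in hdm hE.
have [e le] : exists e, l = (k + e)%N by exists (l - k)%N; rewrite subnKC.
subst l; rewrite addKn in hdm hE.
set d := gcdn e (m * n) in hdm hE.
have hN : (0 < m * n)%N by rewrite muln_gt0 hm hn.
rewrite frobX => hx.
rewrite -(inFq_frob h2 m k).
set y := x ^+ (2 ^ k) in hx *.
have [->|ynz] := eqVneq y 0; first exact: inFq0.
have [g pg] := prim_exists F.
rewrite (card_unit hc) in pg.
have hD : (2 ^ m - 1 %| 2 ^ (m * n) - 1)%N by apply: dvd2; apply: dvdn_mulr.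
have cq : inFq m (a / b) by apply: inFqM => //; apply: inFqV.
have cD : (a / b) ^+ (2 ^ m - 1) = 1 by apply/eqP; rewrite unitFq // cq mulf_neq0 ?invr_eq0.
have PL := powlem pg (2 ^ e - 1) hD cD.
rewrite gcd2 (gcd_em (erefl d) hdm) in PL.
have [x0 [x01 x0E]] : exists x0, x0 ^+ (2 ^ m - 1) = 1 /\ x0 ^+ (2 ^ e - 1) = a / b.
  by apply/PL; rewrite expr_div_n div_eq1 ?expf_neq0.
have /andP [x0q x0nz] : inFq m x0 && (x0 != 0) by rewrite -unitFq // x01.
have ye (z : F) : z ^+ (2 ^ e) = z * z ^+ (2 ^ e - 1).
  by rewrite -exprS subn1 prednK ?expn_gt0.
have hy : y ^+ (2 ^ e) = y * (a / b).
  by apply: (mulfI bnz); rewrite -hx; field; rewrite bnz.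
have cfix : (y / x0) ^+ (2 ^ e) = y / x0.
  by rewrite expr_div_n hy ye x0E; field; rewrite x0nz bnz anz.
have cN : (y / x0) ^+ (2 ^ (m * n)) = y / x0 by apply: frobN.
have cd : (y / x0) ^+ (2 ^ d) = y / x0 by apply: fix_gcd.
have cm : inFq m (y / x0).
  by apply/eqP; rewrite -(divnK hdm) mulnC fixM.
have -> : y = (y / x0) * x0 by rewrite divfK.
exact: inFqM.
Qed.

Lemma KerConv (F : finFieldType) (h2 : 2 \in [pchar F]) (m n k l : nat) (hm : (0 < m)%N) (hn : (0 < n)%N)
  (hc : #|F| = (2 ^ (m * n))%N) (a b : F) (anz : a != 0) (bnz : b != 0)
  (x0 : F) (x0nz : x0 != 0) (hx0 : a * x0 ^+ (2 ^ k) = b * x0 ^+ (2 ^ l))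
  (hK : forall x, a * x ^+ (2 ^ k) = b * x ^+ (2 ^ l) -> inFq m x) :
  (gcdn (distn l k) (m * n) %| m)%N /\
  a ^+ ((2 ^ m - 1) %/ (2 ^ gcdn (distn l k) (m * n) - 1)) =
  b ^+ ((2 ^ m - 1) %/ (2 ^ gcdn (distn l k) (m * n) - 1)).
Proof.
wlog kl : a b k l anz bnz hx0 hK / (k <= l)%N.
  move=> W; have [/W|lk] := leqP k l; first exact.
  have := W b a l k bnz anz (esym hx0) (fun x e => hK x (esym e)) (ltnW lk).
  by rewrite distnC => -[-> ->].
rewrite distn_le //.
have [e le] : exists e, l = (k + e)%N by exists (l - k)%N; rewrite subnKC.
subst l; rewrite addKn.
set d := gcdn e (m * n).
have hN : (0 < m * n)%N by rewrite muln_gt0 hm hn.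
have de : (d %| e)%N by apply: dvdn_gcdl.
have dN : (d %| m * n)%N by apply: dvdn_gcdr.
have x0q := hK x0 hx0.
have hdm : (d %| m)%N.
  apply: (SF h2 hm hn hc dN) => c hcd.
  have [->|cnz] := eqVneq c 0; first exact: inFq0.
  have ce : c ^+ (2 ^ e) = c by rewrite -(divnK de) mulnC fixM.
  have : inFq m (x0 * c).
    have ck : c ^+ (2 ^ (k + e)) = c ^+ (2 ^ k) by rewrite addnC frobX ce.
    by apply: hK; rewrite !exprMn ck !mulrA hx0.
  move=> h; have : inFq m (x0 * c / x0) by apply: inFqM => //; apply: inFqV.
  by rewrite mulrC mulKf.
split => //.
set E := ((2 ^ m - 1) %/ (2 ^ d - 1))%N.
set y := x0 ^+ (2 ^ k) in hx0.
have ynz : y != 0 by rewrite expf_neq0.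
have yq : inFq m y by apply: inFqX.
have w1 : (y ^+ E) ^+ (2 ^ d - 1) = 1.
  rewrite -exprM /E divnK; last by apply: dvd2.
  by apply/eqP; rewrite unitFq // yq ynz.
have wd : (y ^+ E) ^+ (2 ^ d) = y ^+ E.
  by apply/eqP; rewrite fix_unit ?expf_neq0 // w1.
have we : (y ^+ E) ^+ (2 ^ e) = y ^+ E by rewrite -(divnK de) mulnC fixM.
move: hx0; rewrite frobX -/y => /(congr1 (fun z => z ^+ E)).
rewrite !exprMn [y ^+ (2 ^ e) ^+ E]exprAC we.
exact: (mulIf (expf_neq0 E ynz)).
Qed.

Lemma mod_dvd_distn (m k l : nat) : k = l %[mod m] -> (m %| distn l k)%N.
Proof.
wlog kl : k l / (k <= l)%N.
  move=> W; have [kl|lk] := leqP k l; first exact: W.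
  by move=> e; rewrite distnC; apply: (W l k (ltnW lk)); rewrite e.
by move=> e; rewrite distn_le // -eqn_mod_dvd // e.
Qed.

Lemma frob_distn (F : finFieldType) (k l : nat) (c : F) :
  c ^+ (2 ^ (distn l k)) = c -> c ^+ (2 ^ k) = c ^+ (2 ^ l).
Proof.
wlog kl : k l / (k <= l)%N.
  move=> W; have [kl|lk] := leqP k l; first exact: W.
  by rewrite distnC => h; symmetry; apply: W => //; exact: ltnW.
rewrite distn_le // => h.
by rewrite -(subnKC kl) addnC frobX h.
Qed.

Lemma sum_min (F : finFieldType) (k l : nat) (u : F) :
  u ^+ (2 ^ k) + u ^+ (2 ^ l) =
  u ^+ (2 ^ (minn k l)) + (u ^+ (2 ^ (minn k l))) ^+ (2 ^ (distn l k)).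
Proof.
wlog kl : k l / (k <= l)%N.
  move=> W; case/orP: (leq_total k l) => [kl|lk]; first exact: W.
  by rewrite addrC distnC minnC; apply: W.
by rewrite distn_le // (minn_idPl kl) -frobX subnKC.
Qed.

Lemma ed_gt0 (m n e : nat) (hm : (0 < m)%N) (hn : (0 < n)%N) :
  (0 < ((2 ^ m) ^ n - 1) %/ (2 ^ (gcdn e (m * n)) - 1))%N.
Proof.
have hN : (0 < m * n)%N by rewrite muln_gt0 hm hn.
set d := gcdn e _.
have d0 : (0 < d)%N by rewrite gcdn_gt0 hN orbT.
have dN : (d <= m * n)%N by apply: dvdn_leq => //; apply: dvdn_gcdr.
rewrite -expnM divn_gt0; last by rewrite subn_gt0 -{1}(expn0 2) ltn_exp2l.
by rewrite leq_sub2r // leq_exp2l.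
Qed.

Lemma E'_gt0 (m d : nat) (hm : (0 < m)%N) (hdm : (d %| m)%N) :
  (0 < (2 ^ m - 1) %/ (2 ^ d - 1))%N.
Proof.
have d0 : (0 < d)%N by apply: dvdn_gt0 hm hdm.
have dm : (d <= m)%N by apply: dvdn_leq.
rewrite divn_gt0; last by rewrite subn_gt0 -{1}(expn0 2) ltn_exp2l.
by rewrite leq_sub2r // leq_exp2l.
Qed.

Lemma Lf_frobq (F : finFieldType) (h2 : 2 \in [pchar F]) (m k l : nat) (a b u : F) :
  inFq m a -> inFq m b -> (Lf k l a b u) ^+ (2 ^ m) = Lf k l a b (u ^+ (2 ^ m)).
Proof.
move=> /inFqE ha /inFqE hb.
by rewrite /Lf frobD // !exprMn ha hb ![_ ^+ (2 ^ m) ^+ _]exprAC.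
Qed.

Lemma kerh (F : finFieldType) (h2 : 2 \in [pchar F]) (m n e : nat) (hm : (0 < m)%N) (hn : (0 < n)%N)
  (hc : #|F| = (2 ^ (m * n))%N) (hme : (m %| e)%N) (hd : gcdn e (m * n) = m) (y : F) :
  (y + y ^+ (2 ^ e) == 0) = inFq m y.
Proof.
rewrite add2eq // eq_sym; apply/eqP/eqP => h.
  by rewrite -{1}hd; apply: fix_gcd => //; apply: frobN.
by rewrite -(divnK hme) mulnC fixM.
Qed.

Lemma Trh (F : finFieldType) (h2 : 2 \in [pchar F]) (m n e : nat) (hn : (0 < n)%N)
  (hc : #|F| = (2 ^ (m * n))%N) (hme : (m %| e)%N) (y : F) :
  Tr m n (y + y ^+ (2 ^ e)) = 0.
Proof.
by rewrite Tr_add // -(divnK hme) mulnC Tr_frobj // addxx.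
Qed.

Lemma char2_of (F : finFieldType) (m n : nat) (hc : #|F| = (2 ^ (m * n))%N) : 2 \in [pchar F].
Proof. by apply: (card_finPcharP hc). Qed.

Lemma part3 (F : finFieldType) (m n k l : nat) (a b : F) (hm : (0 < m)%N)
  (hc : #|F| = (2 ^ (m * n))%N) (hn : odd n)
  (hL : exists x, Lf k l a b x != 0) (hb : b = 0) :
  is_PP (fmap m n k l a b) <->
  (inFq m a /\ a != 0 /\ a ^+ ((2 ^ m - 1) %/ (2 ^ gcdn (distn k 1) m - 1)) != 1).
Proof.
have h2 := char2_of hc.
have n0 : (0 < n)%N by apply: odd_gt0.
subst b.
have LE u : Lf k l a 0 u = a * u ^+ (2 ^ k) by rewrite /Lf mul0r addr0.
have anz : a != 0.
  by apply/eqP => a0; case: hL => x; rewrite LE a0 mul0r eqxx.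
have Ladd := Lf_add h2 k l a 0.
rewrite (@crit F h2 m n k l a 0 hm hc hn).
have B (aq : inFq m a) : (forall u, inFq m u -> u != 0 -> Lf k l a 0 u != u ^+ 2) <->
         a ^+ ((2 ^ m - 1) %/ (2 ^ gcdn (distn k 1) m - 1)) != 1.
  rewrite -(expr1n F ((2 ^ m - 1) %/ (2 ^ gcdn (distn k 1) m - 1))).
  move: (Blem h2 k hm n0 hc aq (inFq1 F m)) => P; split => H.
    by apply/P => u uq unz; rewrite mul1r -LE; apply: H.
  by move=> u uq unz; rewrite LE -[u ^+ 2]mul1r; apply: (proj2 P H).
split.
  move=> [hA hB].
  have aq : inFq m a.
    by have := A_strong h2 Ladd hA (inFq1 F m); rewrite LE expr1n mulr1.
  by split => //; split => //; apply/(B aq).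
move=> [aq [_ ae]]; split; last by apply/(B aq).
move=> u; rewrite LE => h.
have : inFq m (a^-1 * (a * u ^+ (2 ^ k))) by apply: inFqM => //; apply: inFqV.
by rewrite mulKf // (inFq_frob h2).
Qed.

Lemma part1 (F : finFieldType) (m n k l : nat) (a b : F) (hm : (0 < m)%N)
  (hc : #|F| = (2 ^ (m * n))%N) (hn : odd n)
  (hL : exists x, Lf k l a b x != 0) (hkl : k = l %[mod m]) :
  is_PP (fmap m n k l a b) <->
  ((inFq m (a + b) /\ a + b != 0
    /\ (a + b) ^+ ((2 ^ m - 1) %/ (2 ^ gcdn (distn k 1) m - 1)) != 1
    /\ a ^+ (((2 ^ m) ^ n - 1) %/ (2 ^ gcdn (distn l k) (m * n) - 1))
       != b ^+ (((2 ^ m) ^ n - 1) %/ (2 ^ gcdn (distn l k) (m * n) - 1)))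
   \/ (a + b = 0 /\ gcdn (distn l k) (m * n) = m /\ Tr m n a^-1 != 0)).
Proof.
have h2 := char2_of hc.
have n0 : (0 < n)%N by apply: odd_gt0.
have hN : (0 < m * n)%N by rewrite muln_gt0 hm n0.
have Ladd := Lf_add h2 k l a b.
have Lq u : inFq m u -> Lf k l a b u = (a + b) * u ^+ (2 ^ k).
  by move=> uq; rewrite /Lf (fix_mod (inFqE uq) hkl) mulrDl.
have me : (m %| distn l k)%N := mod_dvd_distn hkl.
set e := distn l k in me *.
have ED0 := ed_gt0 e hm n0.
set ED := (((2 ^ m) ^ n - 1) %/ _)%N in ED0 *.
set E1 := ((2 ^ m - 1) %/ _)%N.
have B (aq : inFq m (a + b)) : (forall u, inFq m u -> u != 0 -> Lf k l a b u != u ^+ 2) <->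
         (a + b) ^+ E1 != 1.
  rewrite -(expr1n F E1).
  move: (Blem h2 k hm n0 hc aq (inFq1 F m)) => P; split => H.
    by apply/P => u uq unz; rewrite mul1r -Lq //; apply: H.
  by move=> u uq unz; rewrite Lq // -[u ^+ 2]mul1r; apply: (proj2 P H).
have Lz x : (Lf k l a b x == 0) = (a * x ^+ (2 ^ k) == b * x ^+ (2 ^ l)) by rewrite /Lf add2eq.
have Linj (hne : a ^+ ED != b ^+ ED) x : Lf k l a b x = 0 -> x = 0.
  move=> /eqP; rewrite Lz => /eqP hx.
  have [a0|anz] := eqVneq a 0.
    move: hx hne; rewrite a0 mul0r expr0n eqn0Ngt ED0 /= => /esym /eqP.
    rewrite mulf_eq0 expf_eq0 expn_gt0 /= => /orP [/eqP ->|/eqP //].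
    by rewrite expr0n eqn0Ngt ED0 eqxx.
  have [b0|bnz] := eqVneq b 0.
    move: hx hne; rewrite b0 mul0r (expr0n _ ED) eqn0Ngt ED0 /= => /eqP.
    rewrite mulf_eq0 expf_eq0 expn_gt0 (negbTE anz) /= => /eqP //.
  have [//|xnz] := eqVneq x 0.
  exfalso; move/eqP: hne; apply; apply/(Klem h2 k l hm n0 hc anz bnz).
  by exists x.
split.
  move=> /(crit h2 _ _ _ _ hm hc hn) [hA hB].
  have aq : inFq m (a + b).
    by have := A_strong h2 Ladd hA (inFq1 F m); rewrite /Lf !expr1n !mulr1.
  have [az|anz] := eqVneq (a + b) 0.
    right.
    have ba : b = a by apply/eqP; rewrite eq_sym -(add2eq h2) az.
    subst b.
    have anz : a != 0.
      by apply/eqP => a0; case: hL => x; rewrite /Lf a0 !mul0r addr0 eqxx.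
    have Lsum u : Lf k l a a u = a * (u ^+ (2 ^ minn k l) + (u ^+ (2 ^ minn k l)) ^+ (2 ^ e)).
      by rewrite /Lf -mulrDr sum_min.
    have hd : gcdn e (m * n) = m.
      apply/eqP; rewrite eqn_dvd; apply/andP; split.
        apply: (SF h2 hm n0 hc (dvdn_gcdr _ _)) => c hcd.
        have ce : c ^+ (2 ^ e) = c by rewrite -(divnK (dvdn_gcdl e (m * n))) mulnC fixM.
        apply: hA; rewrite /Lf (frob_distn ce) addxx //; exact: inFq0.
      by rewrite dvdn_gcd me dvdn_mulr.
    split => //; split => //.
    apply/eqP => T0.
    have hadd (x y : F) : (x + y) + (x + y) ^+ (2 ^ e) = (x + x ^+ (2 ^ e)) + (y + y ^+ (2 ^ e)).
      by rewrite frobD // addrACA.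
    have [y hy] := im_kerTr h2 hm hc n0 hadd (kerh h2 hm n0 hc me hd) (Trh h2 n0 hc me) T0.
    set u := y ^+ (2 ^ (m * n * minn k l - minn k l)).
    have hu : u ^+ (2 ^ minn k l) = y by apply: froot => //; exact: frobN.
    have L1 : Lf k l a a u = 1 by rewrite Lsum hu hy mulfV.
    have := hA u; rewrite L1 inFq1 => /(_ isT) uq.
    by move: L1; rewrite Lq // az mul0r => /eqP; rewrite eq_sym oner_eq0.
  left; split => //; split => //; split; first by apply/(B aq).
  apply/eqP => hE.
  have [a0|a0] := eqVneq a 0.
    move: hE anz; rewrite a0 add0r expr0n eqn0Ngt ED0 /= => /esym /eqP.
    by rewrite expf_eq0 ED0 /= => ->.
  have [b0|b0] := eqVneq b 0.
    move: hE anz; rewrite b0 addr0 (expr0n _ ED) eqn0Ngt ED0 /= => /eqP.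
    by rewrite expf_eq0 ED0 /= => ->.
  have [x [xnz hx]] := (proj2 (Klem h2 k l hm n0 hc a0 b0)) hE.
  have Lx : Lf k l a b x = 0 by apply/eqP; rewrite Lz hx.
  have xq : inFq m x by apply: hA; rewrite Lx inFq0.
  by move: Lx; rewrite Lq // => /eqP; rewrite mulf_eq0 expf_eq0 (negbTE anz) (negbTE xnz) andbF.
case => [[aq [anz [ae hne]]] | [az [hd T]]]; apply/(crit h2 _ _ _ _ hm hc hn); split.
- move=> u hu.
  set z := (a + b)^-1 * Lf k l a b u.
  have zq : inFq m z by apply: inFqM => //; apply: inFqV.
  set v := z ^+ (2 ^ (m * k - k)).
  have vk : v ^+ (2 ^ k) = z by apply: froot => //; exact: inFqE.
  have vq : inFq m v by apply: inFqX.
  have Lv : Lf k l a b v = Lf k l a b u by rewrite Lq // vk /z mulVKf.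
  have : Lf k l a b (u + v) = 0 by rewrite Ladd Lv addxx.
  move/(Linj hne)/eqP; rewrite add2eq // => /eqP ->; exact: vq.
- by apply/(B aq).
- have ba : b = a by apply/eqP; rewrite eq_sym -(add2eq h2) az.
  subst b.
  have anz : a != 0 by apply/eqP => a0; move: T; rewrite a0 invr0 Tr0 eqxx.
  move=> u hu.
  have Lsum : Lf k l a a u = a * (u ^+ (2 ^ minn k l) + (u ^+ (2 ^ minn k l)) ^+ (2 ^ e)).
    by rewrite /Lf -mulrDr sum_min.
  have T1 : Tr m n (Lf k l a a u * a^-1) = 0.
    by rewrite mulrC Lsum mulKf // Trh.
  move: T1; rewrite Tr_scal // => /eqP; rewrite mulf_eq0 (negbTE T) orbF Lsum mulf_eq0 (negbTE anz) /=.
  by rewrite (kerh h2 hm n0 hc me hd) (inFq_frob h2).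
- move=> u uq unz; rewrite Lq // az mul0r eq_sym expf_eq0 /=; exact: unz.
Qed.

Lemma u0_exists (F : finFieldType) (h2 : 2 \in [pchar F]) (m n k : nat) (hm2 : (1 < m)%N) (hn : (0 < n)%N)
  (hc : #|F| = (2 ^ (m * n))%N) (hk : (k %% m != 1)%N) :
  exists u : F, inFq m u /\ u ^+ (2 ^ k) != u ^+ 2.
Proof.
have hm : (0 < m)%N by apply: ltnW.
have [g pg] := prim_exists F.
rewrite (card_unit hc) in pg.
have hD : (2 ^ m - 1 %| 2 ^ (m * n) - 1)%N by apply: dvd2; apply: dvdn_mulr.
have ph := dvdn_prim_root pg hD.
set z := g ^+ _ in ph.
have z1 := prim_expr_order ph.
have znz : z != 0.
  apply/eqP => z0; move: z1; rewrite z0 expr0n.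
  have -> : (2 ^ m - 1 == 0)%N = false.
    by apply/negbTE; rewrite -lt0n subn_gt0 -{1}(expn0 2) ltn_exp2l.
  by move/eqP; rewrite eq_sym oner_eq0.
have zq : inFq m z by have := z1; move/eqP; rewrite unitFq // => /andP [].
exists z; split => //.
rewrite (fix_modn k (inFqE zq)).
have km : (k %% m < m)%N by rewrite ltn_pmod.
move: hk km; set k' := (k %% m)%N; case: k' => [|j] hk km.
  rewrite expr1; apply/eqP => e.
  have : z == 1 by rewrite -(inj_eq (mulfI znz)) mulr1 -expr2 -e.
  rewrite -[z in z == _]expr1 -(prim_order_dvd ph) dvdn1 => /eqP e1.
  have : (2 ^ m <= 2 ^ 1)%N by move: e1; have := expn_gt0 2 m; lia.
  by rewrite leq_exp2l // leqNgt hm2.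
case: j hk km => [//|j] _ km.
apply/eqP; rewrite expnSr exprM => /(sq_inj h2) /eqP.
rewrite fix_unit // -(prim_order_dvd ph) => /dvdn_leq.
have : (0 < 2 ^ j.+1 - 1)%N by rewrite subn_gt0 -{1}(expn0 2) ltn_exp2l.
move=> p /(_ p); rewrite leq_sub2rE ?expn_gt0 // leq_exp2l //.
by rewrite leqNgt (ltn_trans _ km).
Qed.

Lemma add_eq2 (F : finFieldType) (h2 : 2 \in [pchar F]) (x y z : F) : (x + y == z) = (x == z + y).
Proof. by rewrite -subr_eq opp2. Qed.

Lemma part2 (F : finFieldType) (m n k l : nat) (a b : F) (hm : (0 < m)%N)
  (hc : #|F| = (2 ^ (m * n))%N) (hn : odd n)
  (hL : exists x, Lf k l a b x != 0) (hkl : ~ (k = l %[mod m])%N) (hl1 : (l = 1 %[mod m])%N) :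
  is_PP (fmap m n k l a b) <->
  (inFq m a /\ inFq m b
   /\ a ^+ ((2 ^ m - 1) %/ (2 ^ gcdn (distn k 1) m - 1)) != (b + 1) ^+ ((2 ^ m - 1) %/ (2 ^ gcdn (distn k 1) m - 1))
   /\ (a ^+ (((2 ^ m) ^ n - 1) %/ (2 ^ gcdn (distn l k) (m * n) - 1))
       != b ^+ (((2 ^ m) ^ n - 1) %/ (2 ^ gcdn (distn l k) (m * n) - 1))
       \/ ((gcdn (distn l k) (m * n) %| m)%N
           /\ a ^+ ((2 ^ m - 1) %/ (2 ^ gcdn (distn l k) (m * n) - 1))
              = b ^+ ((2 ^ m - 1) %/ (2 ^ gcdn (distn l k) (m * n) - 1))))).
Proof.
have h2 := char2_of hc.
have n0 : (0 < n)%N by apply: odd_gt0.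
have hN : (0 < m * n)%N by rewrite muln_gt0 hm n0.
have Ladd := Lf_add h2 k l a b.
have m2 : (1 < m)%N.
  by case: m hm hkl {hc hN hl1} => [//|[|//]] _; rewrite !modn1.
have Lq u : inFq m u -> Lf k l a b u = a * u ^+ (2 ^ k) + b * u ^+ 2.
  by move=> uq; rewrite /Lf (fix_mod (inFqE uq) hl1) expn1.
set e := distn l k.
have ED0 := ed_gt0 e hm n0.
set ED := (((2 ^ m) ^ n - 1) %/ _)%N in ED0 *.
set E1 := ((2 ^ m - 1) %/ (2 ^ gcdn (distn k 1) m - 1))%N.
set d := gcdn e (m * n).
have B (aq : inFq m a) (bq : inFq m b) :
    (forall u, inFq m u -> u != 0 -> Lf k l a b u != u ^+ 2) <-> a ^+ E1 != (b + 1) ^+ E1.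
  move: (Blem h2 k hm n0 hc aq (inFqD h2 bq (inFq1 F m))) => P.
  have eq u : inFq m u -> (Lf k l a b u == u ^+ 2) = (a * u ^+ (2 ^ k) == (b + 1) * u ^+ 2).
    by move=> uq; rewrite Lq // add_eq2 // mulrDl mul1r addrC.
  split => H.
    by apply/P => u uq unz; rewrite -eq //; apply: H.
  by move=> u uq unz; rewrite eq //; apply: (proj2 P H).
have Lz x : (Lf k l a b x == 0) = (a * x ^+ (2 ^ k) == b * x ^+ (2 ^ l)) by rewrite /Lf add2eq.
have Linj (hne : a ^+ ED != b ^+ ED) x : Lf k l a b x = 0 -> x = 0.
  move=> /eqP; rewrite Lz => /eqP hx.
  have [a0|anz] := eqVneq a 0.
    move: hx hne; rewrite a0 mul0r expr0n eqn0Ngt ED0 /= => /esym /eqP.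
    rewrite mulf_eq0 expf_eq0 expn_gt0 /= => /orP [/eqP ->|/eqP //].
    by rewrite expr0n eqn0Ngt ED0 eqxx.
  have [b0|bnz] := eqVneq b 0.
    move: hx hne; rewrite b0 mul0r (expr0n _ ED) eqn0Ngt ED0 /= => /eqP.
    rewrite mulf_eq0 expf_eq0 expn_gt0 (negbTE anz) /= => /eqP //.
  have [//|xnz] := eqVneq x 0.
  exfalso; move/eqP: hne; apply; apply/(Klem h2 k l hm n0 hc anz bnz).
  by exists x.
have Lnz : ~ (a = 0 /\ b = 0).
  by move=> [a0 b0]; case: hL => x; rewrite /Lf a0 b0 !mul0r addr0 eqxx.
split.
  move=> /(crit h2 _ _ _ _ hm hc hn) [hA hB].
  have hsub := A_strong h2 Ladd hA.
  have key u : inFq m u -> (a ^+ (2 ^ m) + a) * u ^+ (2 ^ k) = (b ^+ (2 ^ m) + b) * u ^+ (2 ^ l).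
    move=> uq; have := inFqE (hsub u uq).
    rewrite /Lf frobD // !exprMn ![_ ^+ (2 ^ _) ^+ (2 ^ m)]exprAC !(inFqE uq) => E.
    apply/eqP; rewrite -add2eq //.
    have -> : (a ^+ (2 ^ m) + a) * u ^+ (2 ^ k) + (b ^+ (2 ^ m) + b) * u ^+ (2 ^ l) =
      (a ^+ (2 ^ m) * u ^+ (2 ^ k) + b ^+ (2 ^ m) * u ^+ (2 ^ l)) + (a * u ^+ (2 ^ k) + b * u ^+ (2 ^ l)) by ring.
    by rewrite E addxx.
  have kq : (k %% m != 1)%N.
    apply/eqP => e1; apply: hkl; rewrite e1 hl1 modn_small //.
  have [u0 [u0q u0n]] := u0_exists h2 m2 n0 hc kq.
  have k1 := key 1 (inFq1 F m); rewrite !expr1n !mulr1 in k1.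
  have := key u0 u0q; rewrite k1 (fix_mod (inFqE u0q) hl1) expn1 => /eqP.
  rewrite -subr_eq0 -mulrBr mulf_eq0 subr_eq0 (negbTE u0n) orbF -k1 add2eq // => /eqP aq'.
  have aq : inFq m a by apply/eqP.
  have bq : inFq m b by apply/eqP; apply/eqP; rewrite -(add2eq h2) -k1 add2eq // aq'.
  split => //; split => //; split; first by apply/(B aq bq).
  have [hE|hne] := eqVneq (a ^+ ED) (b ^+ ED); last by left.
  right.
  have [a0|anz] := eqVneq a 0.
    exfalso; apply: Lnz; split => //; move: hE; rewrite a0 expr0n eqn0Ngt ED0 /= => /esym /eqP.
    by rewrite expf_eq0 ED0 /= => /eqP.
  have [b0|bnz] := eqVneq b 0.
    exfalso; apply: Lnz; split => //; move: hE; rewrite b0 (expr0n _ ED) eqn0Ngt ED0 /= => /eqP.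
    by rewrite expf_eq0 ED0 /= (negbTE anz).
  have [x0 [x0nz hx0]] := (proj2 (Klem h2 k l hm n0 hc anz bnz)) hE.
  apply: (KerConv h2 hm n0 hc anz bnz x0nz hx0) => x hx.
  apply: hA; have -> : Lf k l a b x = 0 by apply/eqP; rewrite Lz hx.
  exact: inFq0.
move=> [aq [bq [hB' hdisj]]]; apply/(crit h2 _ _ _ _ hm hc hn); split; last by apply/(B aq bq).
move=> u hu.
set t := u ^+ (2 ^ m) + u.
have Lt : Lf k l a b t = 0.
  by rewrite /t Ladd -Lf_frobq // (inFqE hu) addxx.
have Tt : Tr m n t = 0 by rewrite /t Tr_add // Tr_frob // addxx.
suff t0 : t = 0 by rewrite -(hq0 h2) -/t t0.
case: hdisj => [hne|[hdm hE]]; first exact: Linj.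
have E0 := E'_gt0 hm hdm.
have [a0|anz] := eqVneq a 0.
  exfalso; apply: Lnz; split => //; move: hE; rewrite a0 expr0n eqn0Ngt E0 /= => /esym /eqP.
  by rewrite expf_eq0 E0 /= => /eqP.
have [b0|bnz] := eqVneq b 0.
  exfalso; apply: Lnz; split => //; move: hE; rewrite b0 (expr0n _ ((2 ^ m - 1) %/ _)) eqn0Ngt E0 /= => /eqP.
  by rewrite expf_eq0 E0 /= (negbTE anz).
have tq : inFq m t.
  apply: (KerFq h2 hm n0 hc aq bq anz bnz hdm hE).
  by apply/eqP; rewrite -Lz Lt.
by rewrite -(Tr_const h2 hn tq).
Qed.

Unset Implicit Arguments.

Theorem mainTheorem3 (F : finFieldType) (m n k l : nat) (a b : F) :
  (0 < m)%N -> #|F| = (2 ^ (m * n))%N -> odd n ->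
  (k < m * n)%N -> (l < m * n)%N ->
  (exists x : F, a * x ^+ (2 ^ k) + b * x ^+ (2 ^ l) != 0) ->
  let q := (2 ^ m)%N in
  let d := gcdn (distn l k) (m * n) in
  let s := gcdn (distn k 1) m in
  (* (1) *)
  ((k = l %[mod m])%N ->
     (is_PP (fmap m n k l a b) <->
       ((inFq m (a + b) /\ a + b != 0
         /\ (a + b) ^+ ((q - 1) %/ (2 ^ s - 1)) != 1
         /\ a ^+ ((q ^ n - 1) %/ (2 ^ d - 1)) != b ^+ ((q ^ n - 1) %/ (2 ^ d - 1)))
        \/
        (a + b = 0 /\ d = m /\ Tr m n a^-1 != 0))))
  /\
  (* (2) *)
  (~ (k = l %[mod m])%N -> (l = 1 %[mod m])%N ->
     (is_PP (fmap m n k l a b) <->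
       (inFq m a /\ inFq m b
        /\ a ^+ ((q - 1) %/ (2 ^ s - 1)) != (b + 1) ^+ ((q - 1) %/ (2 ^ s - 1))
        /\ (a ^+ ((q ^ n - 1) %/ (2 ^ d - 1)) != b ^+ ((q ^ n - 1) %/ (2 ^ d - 1))
            \/ ((d %| m)%N
                /\ a ^+ ((q - 1) %/ (2 ^ d - 1)) = b ^+ ((q - 1) %/ (2 ^ d - 1)))))))
  /\
  (* (3) *)
  (b = 0 ->
     (is_PP (fmap m n k l a b) <->
       (inFq m a /\ a != 0 /\ a ^+ ((q - 1) %/ (2 ^ s - 1)) != 1))).
Proof.
move=> hm hc hn _ _ hL q d s.
have hL' : exists x, Lf k l a b x != 0 := hL.
rewrite /q /d /s.
split; first by move=> hkl; exact: (part1 hm hc hn hL' hkl).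
split; first by move=> hkl hl1; exact: (part2 hm hc hn hL' hkl hl1).
by move=> hb; exact: (part3 hm hc hn hL' hb).
Qed.
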